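(* Let $\ell\in\{1,2\}$ and let ${\cal H}\subset{\cal H}_0$, $a_\ell$, $C_{{\rm G1},\ell}$, $C_{{\rm G2},\ell}$, ${\mathcal A}_\ell$ be as in the context (the standing assumptions there hold), and let $0<C_{{\rm qo},\ell}<\infty$. Let $({\cal H}_N)_{N=0}^\infty$ be a sequence of finite-dimensional subspaces of ${\cal H}$ such that, for every $N$ and every $f\in{\cal H}_0$, the Galerkin solution $u_N\in{\cal H}_N$ of $a_\ell(u_N,v_N)=(f,v_N)_{{\cal H}_0}$ for all $v_N\in{\cal H}_N$ exists, is unique, and satisfies $$\|u-u_N\|_{{\cal H}}\le C_{{\rm qo},\ell}\|(I-\Pi_N)u\|_{{\cal H}},$$ where $\Pi_N:{\cal H}\to{\cal H}_N$ is the ${\cal H}$-orthogonal projection and $u\in{\cal H}$ is the solution of $a_\ell(u,v)=(f,v)_{{\cal H}_0}$ for all $v\in{\cal H}$. Then for every $N$, $$\inf_{u_N\in{\cal H}_N\setminus\{0\}}\sup_{v_N\in{\cal H}_N\setminus\{0\}}\frac{|a_\ell(u_N,v_N)|}{\|u_N\|_{{\cal H}}\|v_N\|_{{\cal H}}}\ge\frac{1}{(C_{{\rm G1},\ell})^{-1}\Big(1+C_{{\rm G2},\ell}(1+C_{{\rm qo},\ell})\|{\mathcal A}_\ell^{-1}\|_{{\cal H}_0\to{\cal H}}\Big)}.$$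
   Context: Standing assumptions: ${\cal H}\subset{\cal H}_0$ are complex Hilbert spaces with $\|v\|_{{\cal H}_0}\le\|v\|_{{\cal H}}$ for $v\in{\cal H}$, and ${\cal H}_0$ is identified with its dual so that ${\cal H}\subset{\cal H}_0\subset{\cal H}^*$. ${\mathcal D}:{\cal H}\to{\cal H}_0$ is linear with $\|{\mathcal D}\|_{{\cal H}\to{\cal H}_0}\le 1$; $b(\cdot,\cdot)$ is a continuous sesquilinear form on ${\cal H}$; for $\ell=1,2$, $\mu_\ell^{-1}:{\cal H}_0\to{\cal H}_0$ and $\epsilon_\ell:{\cal H}_0\to{\cal H}_0$ are bounded linear operators, and $a_\ell(u,v):=(\mu_\ell^{-1}{\mathcal D}u,{\mathcal D}v)_{{\cal H}_0}+b(u,v)-(\epsilon_\ell u,v)_{{\cal H}_0}$. For $\ell=1,2$ there exist $C_{{\rm G1},\ell},C_{{\rm G2},\ell}>0$ with $|a_\ell(v,v)+C_{{\rm G2},\ell}\|v\|_{{\cal H}_0}^2|\ge C_{{\rm G1},\ell}\|v\|_{{\cal H}}^2$ for all $v\in{\cal H}$. ${\mathcal A}_\ell:{\cal H}\to{\cal H}^*$ is defined by $\langle{\mathcal A}_\ell u,v\rangle_{{\cal H}^*\times{\cal H}}=a_\ell(u,v)$, and $\|{\mathcal A}_\ell^{-1}\|_{{\cal H}_0\to{\cal H}}$ is the norm of the solution map $f\mapsto u$ from ${\cal H}_0$ to ${\cal H}$. *)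

(* Defs.v *)
From mathcomp Require Import all_boot all_algebra complex.
From mathcomp Require Import all_classical all_reals.
Set Implicit Arguments. Unset Strict Implicit. Unset Printing Implicit Defensive.
Import GRing.Theory Num.Theory.
Local Open Scope ring_scope.
Local Open Scope classical_set_scope.

Section HilbertDefs.
Context {R : realType} {V : lmodType R[i]}.

Definition cmod (z : R[i]) : R :=
  Num.sqrt (complex.Re z ^+ 2 + complex.Im z ^+ 2).

Definition subspace (P : V -> Prop) : Prop :=
  P 0 /\ forall (a : R[i]) u v, P u -> P v -> P (a *: u + v).

Definition is_inner_product (P : V -> Prop) (ip : V -> V -> R[i]) : Prop :=
  (forall (a : R[i]) u v w, P u -> P v -> P w ->
      ip (a *: u + v) w = a * ip u w + ip v w) /\
  (forall u v, P u -> P v -> ip v u = (ip u v)^*) /\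
  (forall u, P u -> 0 <= complex.Re (ip u u)) /\
  (forall u, P u -> ip u u = 0 -> u = 0).

Definition ipnorm (ip : V -> V -> R[i]) (u : V) : R :=
  Num.sqrt (complex.Re (ip u u)).

Definition complete_wrt (P : V -> Prop) (ip : V -> V -> R[i]) : Prop :=
  forall s : nat -> V, (forall n, P (s n)) ->
    (forall e : R, 0 < e -> exists N : nat, forall m n : nat,
        (N <= m)%N -> (N <= n)%N -> ipnorm ip (s m - s n) < e) ->
    exists l, P l /\ (forall e : R, 0 < e -> exists N : nat,
        forall n : nat, (N <= n)%N -> ipnorm ip (s n - l) < e).

Definition hilbert (P : V -> Prop) (ip : V -> V -> R[i]) : Prop :=
  subspace P /\ is_inner_product P ip /\ complete_wrt P ip.

Definition linear_on (P : V -> Prop) (f : V -> V) : Prop :=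
  forall (a : R[i]) u v, P u -> P v -> f (a *: u + v) = a *: f u + f v.

Definition sesquilinear_on (P : V -> Prop) (b : V -> V -> R[i]) : Prop :=
  (forall (a : R[i]) u v w, P u -> P v -> P w ->
      b (a *: u + v) w = a * b u w + b v w) /\
  (forall (a : R[i]) u v w, P u -> P v -> P w ->
      b u (a *: v + w) = a^* * b u v + b u w).

Definition finite_dim (P : V -> Prop) : Prop :=
  exists (n : nat) (e : 'I_n -> V),
    forall v, P v <-> exists c : 'I_n -> R[i], v = \sum_(i < n) c i *: e i.

Definition a_form (ip0 : V -> V -> R[i]) (muinv D eps : V -> V)
  (b : V -> V -> R[i]) (u v : V) : R[i] :=
  ip0 (muinv (D u)) (D v) + b u v - ip0 (eps u) v.

(* Standing assumptions of the context.  H0 is the whole space V with inner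
   product ip0; H is the subspace H of V with inner product ip. *)
Definition standing_assumptions (H : V -> Prop) (ip ip0 : V -> V -> R[i])
  (D muinv eps : V -> V) (b : V -> V -> R[i]) (CG1 CG2 : R) : Prop :=
  hilbert (fun _ => True) ip0 /\
      hilbert H ip /\
      (forall v, H v -> ipnorm ip0 v <= ipnorm ip v) /\
      linear_on H D /\ (forall v, H v -> ipnorm ip0 (D v) <= ipnorm ip v) /\
      sesquilinear_on H b /\ (exists Cb : R, forall u v, H u -> H v ->
           cmod (b u v) <= Cb * ipnorm ip u * ipnorm ip v) /\
      (linear_on (fun _ => True) muinv /\ exists K : R, forall v,
           ipnorm ip0 (muinv v) <= K * ipnorm ip0 v) /\
      (linear_on (fun _ => True) eps /\ exists K : R, forall v,
           ipnorm ip0 (eps v) <= K * ipnorm ip0 v) /\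
      0 < CG1 /\ 0 < CG2 /\
      (forall v, H v -> CG1 * ipnorm ip v ^+ 2 <=
         cmod (a_form ip0 muinv D eps b v v + Complex (CG2 * ipnorm ip0 v ^+ 2) 0)).

End HilbertDefs.

(* Main.v *)
Require Import Defs.
From mathcomp Require Import all_boot all_algebra complex.
From mathcomp Require Import all_classical all_reals.
From mathcomp Require Import ring lra.
Set Implicit Arguments. Unset Strict Implicit. Unset Printing Implicit Defensive.
Import order.Order.TTheory GRing.Theory Num.Theory.
Local Open Scope ring_scope.
Local Open Scope classical_set_scope.
Local Notation "x %:C" := (real_complex _ x) (format "x %:C") : ring_scope.

Section IP.
Context {R : realType} {V : lmodType R[i]}.
Variables (P : V -> Prop) (ip : V -> V -> R[i]).
Hypothesis hP : subspace P.
Hypothesis hip : is_inner_product P ip.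
Set Default Proof Using "All".

Lemma P0 : P 0. Proof. by case: hP. Qed.
Lemma PD u v : P u -> P v -> P (u + v).
Proof. by move=> Pu Pv; have := hP.2 1 u v Pu Pv; rewrite scale1r. Qed.
Lemma PZ a u : P u -> P (a *: u).
Proof. by move=> Pu; have := hP.2 a u 0 Pu P0; rewrite addr0. Qed.
Lemma PN u : P u -> P (- u).
Proof. by move=> Pu; rewrite -scaleN1r; apply: PZ. Qed.
Lemma PB u v : P u -> P v -> P (u - v).
Proof. by move=> Pu Pv; apply: PD => //; apply: PN. Qed.

Lemma ip0l w : P w -> ip 0 w = 0.
Proof.
move=> Pw; have := hip.1 1 0 0 w P0 P0 Pw; rewrite scale1r addr0 mul1r.
by move=> h; apply: (addrI (ip 0 w)); rewrite addr0 -h.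
Qed.
Lemma ipDl u v w : P u -> P v -> P w -> ip (u + v) w = ip u w + ip v w.
Proof. by move=> Pu Pv Pw; rewrite -[u in LHS]scale1r hip.1 // mul1r. Qed.
Lemma ipZl a u w : P u -> P w -> ip (a *: u) w = a * ip u w.
Proof. by move=> Pu Pw; rewrite -[_ *: _]addr0 hip.1 // ?ip0l ?addr0 //; apply: P0. Qed.
Lemma ipNl u w : P u -> P w -> ip (- u) w = - ip u w.
Proof. by move=> Pu Pw; rewrite -scaleN1r ipZl // mulN1r. Qed.
Lemma ipBl u v w : P u -> P v -> P w -> ip (u - v) w = ip u w - ip v w.
Proof. by move=> Pu Pv Pw; rewrite ipDl ?ipNl //; apply: PN. Qed.
Lemma ipC u v : P u -> P v -> ip v u = (ip u v)^*.
Proof. by move=> Pu Pv; apply: hip.2.1. Qed.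
Lemma ipDr u v w : P u -> P v -> P w -> ip u (v + w) = ip u v + ip u w.
Proof.
move=> Pu Pv Pw; rewrite (ipC (PD Pv Pw) Pu) ipDl // rmorphD.
by rewrite (ipC Pv Pu) (ipC Pw Pu).
Qed.
Lemma ipZr a u v : P u -> P v -> ip u (a *: v) = a^* * ip u v.
Proof. by move=> Pu Pv; rewrite (ipC (PZ a Pv) Pu) ipZl // rmorphM (ipC Pv Pu). Qed.
Lemma ipNr u v : P u -> P v -> ip u (- v) = - ip u v.
Proof. by move=> Pu Pv; rewrite -scaleN1r ipZr // rmorphN1 mulN1r. Qed.
Lemma ipBr u v w : P u -> P v -> P w -> ip u (v - w) = ip u v - ip u w.
Proof. by move=> Pu Pv Pw; rewrite ipDr ?ipNr //; apply: PN. Qed.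
Lemma ipLr al u v w : P u -> P v -> P w -> ip u (al *: v + w) = al^* * ip u v + ip u w.
Proof. by move=> Pu Pv Pw; rewrite ipDr ?ipZr //; apply: PZ. Qed.
Lemma ip0r u : P u -> ip u 0 = 0.
Proof. by move=> Pu; rewrite (ipC P0 Pu) ip0l // rmorph0. Qed.

Lemma ip_self u : P u -> ip u u = (complex.Re (ip u u))%:C.
Proof.
move=> Pu; have := ipC Pu Pu; case: (ip u u) => x y /= [] /eqP.
rewrite -subr_eq0 opprK -mulr2n mulrn_eq0 /= => /eqP ->. by [].
Qed.
Lemma ip_ge0 u : P u -> 0 <= ip u u.
Proof. by move=> Pu; rewrite ip_self // ler0c; apply: hip.2.2.1. Qed.

Lemma nrmE u : P u -> (ipnorm ip u)%:C ^+ 2 = ip u u.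
Proof.
move=> Pu; rewrite /ipnorm -rmorphXn /= sqr_sqrtr -?ip_self //.
by apply: hip.2.2.1.
Qed.
Lemma nrm_ge0 u : 0 <= ipnorm ip u.
Proof. exact: sqrtr_ge0. Qed.
Lemma nrm_eq0 u : P u -> ipnorm ip u = 0 -> u = 0.
Proof.
move=> Pu h; apply: hip.2.2.2 => //; by rewrite -nrmE // h expr0n.
Qed.

Lemma ip_gt0 u : P u -> u <> 0 -> 0 < ip u u.
Proof.
move=> Pu nu; rewrite lt0r ip_ge0 // andbT; apply/eqP => h.
by apply: nu; apply: hip.2.2.2.
Qed.

Lemma CS u v : P u -> P v -> `|ip u v| ^+ 2 <= ip u u * ip v v.
Proof.
move=> Pu Pv; have [->|nv] := eqVneq v 0.
  by rewrite ip0r // ip0l ?normr0 ?expr0n ?mulr0 //; apply: P0.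
have ygt : 0 < ip v v by apply: ip_gt0 => //; apply/eqP.
have yr : (ip v v)^* = ip v v by rewrite -ipC.
have y0 : ip v v != 0 by move: ygt; rewrite lt0r => /andP[].
pose t := ip u v / ip v v.
have := ip_ge0 (PB Pu (PZ t Pv)).
rewrite ipBl ?ipBr ?ipZl ?ipZr //; try by [apply: PZ | apply: PB => //; apply: PZ].
have tc : t^* = (ip u v)^* / ip v v by rewrite /t rmorphM fmorphV; congr (_ * _^-1); exact: yr.
rewrite tc -(ipC Pu Pv) /t => h.
rewrite normCK -ler_pdivrMr // -subr_ge0.
rewrite -(ipC Pu Pv).
suff -> : ip u u - ip u v * ip v u / ip v v =
  ip u u - ip v u / ip v v * ip u v -
    (ip u v / ip v v * ip v u - ip u v / ip v v * (ip v u / ip v v * ip v v)) by [].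
by field.
Qed.

Lemma CSn u v : P u -> P v -> `|ip u v| <= (ipnorm ip u * ipnorm ip v)%:C.
Proof.
move=> Pu Pv; rewrite -(@ler_pXn2r _ 2) ?nnegrE ?normr_ge0 //; last first.
  by rewrite ler0c mulr_ge0 // nrm_ge0.
by rewrite rmorphM exprMn !nrmE //; apply: CS.
Qed.

Lemma CSr u v : P u -> P v -> cmod (ip u v) <= ipnorm ip u * ipnorm ip v.
Proof. by move=> Pu Pv; have := CSn Pu Pv; rewrite normc_def lecR. Qed.

Lemma nrm_triangle u v : P u -> P v ->
  ipnorm ip (u + v) <= ipnorm ip u + ipnorm ip v.
Proof.
move=> Pu Pv; rewrite -lecR -(@ler_pXn2r _ 2) ?nnegrE ?ler0c ?addr_ge0 ?nrm_ge0 //.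
rewrite nrmE; last by apply: PD.
rewrite rmorphD sqrrD !nrmE // ipDl ?ipDr //; try by apply: PD.
rewrite (ipC Pu Pv) -!addrA lerD2l !addrA lerD2r.
have hr : (ip u v + (ip u v)^*) \is Num.real.
  by rewrite CrealE rmorphD /= conjCK addrC.
apply: le_trans (real_ler_norm hr) _.
apply: le_trans (ler_normD _ _) _.
rewrite norm_conjC.
by have := CSn Pu Pv; rewrite rmorphM => h; apply: lerD.
Qed.

Lemma nrmN u : P u -> ipnorm ip (- u) = ipnorm ip u.
Proof. by move=> Pu; rewrite /ipnorm ipNl ?ipNr ?opprK //; apply: PN. Qed.

Lemma sq_inj (a b : R) : 0 <= a -> 0 <= b -> a%:C ^+ 2 = b%:C ^+ 2 -> a = b.
Proof.
move=> a0 b0; rewrite -!rmorphXn => /complexI h.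
by apply/eqP; rewrite -(@eqrXn2 _ 2) // h.
Qed.

Lemma nrmZ k u : P u -> 0 <= k -> ipnorm ip (k%:C *: u) = k * ipnorm ip u.
Proof.
move=> Pu k0; apply: sq_inj; rewrite ?nrm_ge0 ?mulr_ge0 ?nrm_ge0 //.
have Pk := PZ k%:C Pu.
rewrite nrmE // ipZl // ipZr // rmorphM exprMn nrmE //.
have -> : (k%:C)^* = k%:C by exact: conjc_real.
by rewrite mulrA expr2.
Qed.

Lemma pyth u p : P u -> P p -> ip (u - p) p = 0 -> ipnorm ip (u - p) <= ipnorm ip u.
Proof.
move=> Pu Pp h; have Pup := PB Pu Pp.
rewrite -lecR -(@ler_pXn2r _ 2) ?nnegrE ?ler0c ?nrm_ge0 // !nrmE //.
have -> : ip u u = ip ((u - p) + p) ((u - p) + p) by rewrite subrK.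
move: (u - p) Pup h => w Pw h.
rewrite ipDl ?ipDr //; try exact: PD.
rewrite h (ipC Pw Pp) h rmorph0 addr0 addrA addr0 lerDl.
exact: ip_ge0.
Qed.
End IP.

Section Span.
Context {R : realType} {V : lmodType R[i]}.

Definition spanq m (q : 'I_m -> V) v := exists c : 'I_m -> R[i], v = \sum_i c i *: q i.
Definition freeq m (q : 'I_m -> V) :=
  forall c : 'I_m -> R[i], \sum_i c i *: q i = 0 -> forall i, c i = 0.

Lemma span0 m (q : 'I_m -> V) : spanq q 0.
Proof. by exists (fun _ => 0); rewrite big1 // => i _; rewrite scale0r. Qed.
Lemma spanD m (q : 'I_m -> V) u v : spanq q u -> spanq q v -> spanq q (u + v).
Proof.
move=> [c ->] [d ->]; exists (fun i => c i + d i).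
by rewrite -big_split /=; apply: eq_bigr => i _; rewrite scalerDl.
Qed.
Lemma spanZ m (q : 'I_m -> V) a u : spanq q u -> spanq q (a *: u).
Proof.
move=> [c ->]; exists (fun i => a * c i).
by rewrite scaler_sumr; apply: eq_bigr => i _; rewrite scalerA.
Qed.
Lemma span_gen m (q : 'I_m -> V) i : spanq q (q i).
Proof.
exists (fun j => if j == i then 1 else 0).
rewrite (bigD1 i) //= eqxx scale1r big1 ?addr0 // => j /negbTE ->.
by rewrite scale0r.
Qed.
Lemma span_sub m1 m2 (q1 : 'I_m1 -> V) (q2 : 'I_m2 -> V) :
  (forall i, spanq q2 (q1 i)) -> forall v, spanq q1 v -> spanq q2 v.
Proof.
move=> h v [c ->]; apply: (big_ind (spanq q2)); first exact: span0.
  by move=> x y; apply: spanD.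
by move=> i _; apply: spanZ.
Qed.

Lemma basis_ex n (e : 'I_n -> V) :
  exists m (q : 'I_m -> V), freeq q /\ forall v, spanq e v <-> spanq q v.
Proof.
elim: n e => [|n IH] e.
  by exists 0%N, e; split => // c _ [].
pose e' := fun i : 'I_n => e (widen_ord (leqnSn n) i).
have [m [q [fq sq]]] := IH e'.
have ee' : forall v, spanq e v <-> (exists w a, spanq e' w /\ v = w + a *: e ord_max).
  move=> v; split.
    move=> [c ->]; rewrite big_ord_recr /=.
    exists (\sum_(i < n) c (widen_ord (leqnSn n) i) *: e' i), (c ord_max).
    by split => //; exists (fun i => c (widen_ord (leqnSn n) i)).
  move=> [w [a [[c ->] ->]]].
  exists (fun i : 'I_n.+1 => if unlift ord_max i is Some j then c j else a).
  rewrite big_ord_recr /= unlift_none; congr (_ + _); apply: eq_bigr => i _.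
  suff -> : unlift ord_max (widen_ord (leqnSn n) i) = Some i by [].
  have := unlift_some (neq_lift ord_max i) => -[j]; rewrite /=.
  move=> h1 h2; suff -> : widen_ord (leqnSn n) i = lift ord_max i by rewrite liftK.
  by apply: val_inj; rewrite /= /bump leqNgt ltn_ord.
have [inq|notq] := pselect (spanq q (e ord_max)).
  exists m, q; split => // v; rewrite ee'; split.
    move=> [w [a [/sq sw ->]]]; apply: spanD => //; exact: spanZ.
  by move=> /sq sw; exists v, 0; rewrite scale0r addr0.
pose q' := fun i : 'I_m.+1 => if unlift ord_max i is Some j then q j else e ord_max.
have q'w : forall j, q' (widen_ord (leqnSn m) j) = q j.
  move=> j; rewrite /q'.
  suff -> : widen_ord (leqnSn m) j = lift ord_max j by rewrite liftK.
  by apply: val_inj; rewrite /= /bump leqNgt ltn_ord.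
have q'm : q' ord_max = e ord_max by rewrite /q' unlift_none.
have spq' : forall v, spanq q' v <-> (exists w a, spanq q w /\ v = w + a *: e ord_max).
  move=> v; split.
    move=> [c ->]; rewrite big_ord_recr /= q'm.
    exists (\sum_(i < m) c (widen_ord (leqnSn m) i) *: q i), (c ord_max).
    split => //; last by congr (_ + _); apply: eq_bigr => i _; rewrite q'w.
    by exists (fun i => c (widen_ord (leqnSn m) i)).
  move=> [w [a [[c ->] ->]]].
  exists (fun i : 'I_m.+1 => if unlift ord_max i is Some j then c j else a).
  rewrite big_ord_recr /= unlift_none q'm; congr (_ + _); apply: eq_bigr => i _.
  rewrite q'w.
  suff -> : widen_ord (leqnSn m) i = lift ord_max i by rewrite liftK.
  by apply: val_inj; rewrite /= /bump leqNgt ltn_ord.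
exists m.+1, q'; split.
  move=> c; rewrite big_ord_recr /= q'm => h.
  have cm : c ord_max = 0.
    apply: contra_notP notq => /eqP cm0.
    have -> : e ord_max = - (c ord_max)^-1 *: \sum_(i < m) c (widen_ord (leqnSn m) i) *: q' (widen_ord (leqnSn m) i).
      apply: (scalerI cm0); rewrite scalerA mulrN mulrV ?unitfE // scaleN1r.
      by apply/eqP; rewrite -addr_eq0 addrC h.
    apply: spanZ; apply: (big_ind (spanq q)); first exact: span0.
      by move=> x y; apply: spanD.
    by move=> i _; rewrite q'w; apply: spanZ; apply: span_gen.
  rewrite cm scale0r addr0 in h.
  have hq := fq (fun i => c (widen_ord (leqnSn m) i)).
  have {}hq : forall i, c (widen_ord (leqnSn m) i) = 0.
    by apply: hq; rewrite -[RHS]h; apply: eq_bigr => i _; rewrite q'w.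
  move=> i; have [->|ne] := eqVneq i ord_max; first exact: cm.
  have lt : (i < m)%N.
    have := ltn_ord i; rewrite ltnS leq_eqVlt => /orP[/eqP h0|//].
    by case/eqP: ne; apply: val_inj.
  by have := hq (Ordinal lt); rewrite /=; congr (c _ = 0); apply: val_inj.
move=> v; rewrite ee' spq'; split.
  by move=> [w [a [/sq sw ->]]]; exists w, a.
by move=> [w [a [/sq sw ->]]]; exists w, a.
Qed.
End Span.

Lemma cmod_tri {R : realType} (x y z : R[i]) : cmod (x + y - z) <= cmod x + cmod y + cmod z.
Proof.
have hc : forall w : R[i], `|w| = (cmod w)%:C by move=> w; rewrite normc_def.
rewrite -lecR !rmorphD /= -!hc.
apply: le_trans (ler_normB _ _) _; rewrite lerD2r; exact: ler_normD.
Qed.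

Lemma lerM2l' {R : realType} (z x y : R) : 0 <= z -> x <= y -> z * x <= z * y.
Proof. by move=> z0 h; apply: ler_wpM2l. Qed.
Lemma lerM2r' {R : realType} (z x y : R) : 0 <= z -> x <= y -> x * z <= y * z.
Proof. by move=> z0 h; apply: ler_wpM2r. Qed.

Section Sums.
Context {R : realType} {V : lmodType R[i]}.

Lemma sum_lin (P : V -> Prop) (f : V -> R[i]) m (q : 'I_m -> V) (c : 'I_m -> R[i]) :
  subspace P -> (forall al u v, P u -> P v -> f (al *: u + v) = al * f u + f v) ->
  (forall i, P (q i)) -> f (\sum_i c i *: q i) = \sum_i c i * f (q i).
Proof.
move=> sP hf hq.
have f0 : f 0 = 0.
  have := hf 1 0 0 sP.1 sP.1; rewrite scale1r addr0 mul1r => h.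
  by apply: (addrI (f 0)); rewrite addr0 -h.
pose K x y := P x /\ f x = y.
suff [] : K (\sum_i c i *: q i) (\sum_i c i * f (q i)) by [].
apply: (big_rec2 K); first by split; [exact: sP.1 | exact: f0].
move=> i x y _ [Px <-]; split; first exact: sP.2.
exact: hf.
Qed.

Lemma sum_alin (P : V -> Prop) (f : V -> R[i]) m (q : 'I_m -> V) (c : 'I_m -> R[i]) :
  subspace P -> (forall al u v, P u -> P v -> f (al *: u + v) = al^* * f u + f v) ->
  (forall i, P (q i)) -> f (\sum_i c i *: q i) = \sum_i (c i)^* * f (q i).
Proof.
move=> sP hf hq.
have f0 : f 0 = 0.
  have := hf 1 0 0 sP.1 sP.1; rewrite scale1r addr0 rmorph1 mul1r => h.
  by apply: (addrI (f 0)); rewrite addr0 -h.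
pose K x y := P x /\ f x = y.
suff [] : K (\sum_i c i *: q i) (\sum_i (c i)^* * f (q i)) by [].
apply: (big_rec2 K); first by split; [exact: sP.1 | exact: f0].
move=> i x y _ [Px <-]; split; first exact: sP.2.
exact: hf.
Qed.
End Sums.

Theorem corollary4p9 (R : realType) (V : lmodType R[i])
  (H : V -> Prop) (ip ip0 : V -> V -> R[i]) (D muinv eps : V -> V)
  (b : V -> V -> R[i]) (CG1 CG2 Cqo M : R)
  (HN : nat -> V -> Prop) (Pi : nat -> V -> V) :
  standing_assumptions H ip ip0 D muinv eps b CG1 CG2 ->
  let a := a_form ip0 muinv D eps b in
  (* the continuous problem is uniquely solvable for every f in H0 *)
  (forall f, exists u, H u /\ (forall v, H v -> a u v = ip0 f v) /\
     forall u', H u' -> (forall v, H v -> a u' v = ip0 f v) -> u' = u) ->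
  (* M is a bound for the norm of the solution operator H0 -> H *)
  0 <= M ->
  (forall f u, H u -> (forall v, H v -> a u v = ip0 f v) ->
     ipnorm ip u <= M * ipnorm ip0 f) ->
  0 < Cqo ->
  (* finite-dimensional subspaces of H *)
  (forall N, subspace (HN N) /\ (forall v, HN N v -> H v) /\ finite_dim (HN N)) ->
  (* Pi N is the H-orthogonal projection onto HN N *)
  (forall N u, H u -> HN N (Pi N u) /\
     forall v, HN N v -> ip (u - Pi N u) v = 0) ->
  (* the Galerkin solutions exist and are unique *)
  (forall N f, exists uN, HN N uN /\ (forall vN, HN N vN -> a uN vN = ip0 f vN) /\
     forall uN', HN N uN' -> (forall vN, HN N vN -> a uN' vN = ip0 f vN) -> uN' = uN) ->
  (* quasi-optimality *)
  (forall N f u uN, H u -> (forall v, H v -> a u v = ip0 f v) ->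
     HN N uN -> (forall vN, HN N vN -> a uN vN = ip0 f vN) ->
     ipnorm ip (u - uN) <= Cqo * ipnorm ip (u - Pi N u)) ->
  (* discrete inf-sup bound: every element of the inf is >= the bound *)
  forall N uN, HN N uN -> uN <> 0 ->
    1 / (CG1^-1 * (1 + CG2 * (1 + Cqo) * M)) <=
    sup [set cmod (a uN vN) / (ipnorm ip uN * ipnorm ip vN)
         | vN in [set vN | HN N vN /\ vN <> 0]].
Proof.
move=> [[_ [i0 _]] [[sH [iH _]] [h0H [linD [bD [sesqb [[Cb hb] [[linmu [K1 hmu]]
  [[lineps [K2 heps]] [CG1p [CG2p gard]]]]]]]]]]] a ex_cont M0 hM Cqo0 hHN hPi
  ex_gal qo N uN HNu un0.
have s0 : subspace (fun _ : V => True) by split.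
have [sN [inclN fdN]] := hHN N.
set nrm := ipnorm ip; set nrm0 := ipnorm ip0.
have nge0 : forall v, 0 <= nrm v by move=> v; exact: sqrtr_ge0.
have aLl : forall al u v w, H u -> H v -> H w -> a (al *: u + v) w = al * a u w + a v w.
  move=> al u v w Hu Hv Hw; rewrite /a /a_form (linD al u v Hu Hv) (linmu al _ _ I I).
  rewrite (i0.1 al _ _ _ I I I) (sesqb.1 al u v w Hu Hv Hw) (lineps al u v I I).
  rewrite (i0.1 al _ _ _ I I I); ring.
have aLr : forall al u v w, H u -> H v -> H w -> a u (al *: v + w) = al^* * a u v + a u w.
  move=> al u v w Hu Hv Hw; rewrite /a /a_form (linD al v w Hv Hw).
  rewrite (ipLr s0 i0 al I I I) (sesqb.2 al u v w Hu Hv Hw) (ipLr s0 i0 al I I I); ring.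
have a0r : forall u, H u -> a u 0 = 0.
  move=> u Hu; have := aLr 1 u 0 0 Hu sH.1 sH.1.
  rewrite scale1r addr0 rmorph1 mul1r => h.
  by apply: (addrI (a u 0)); rewrite addr0 -h.
have a0l : forall w, H w -> a 0 w = 0.
  move=> w Hw; have := aLl 1 0 0 w sH.1 sH.1 Hw.
  rewrite scale1r addr0 mul1r => h.
  by apply: (addrI (a 0 w)); rewrite addr0 -h.
have [n [e he]] := fdN.
have [m [q [fq sq]]] := basis_ex e.
have hspan : forall v, HN N v <-> spanq q v.
  by move=> v; split => [/he /sq | /sq /he].
have qN : forall i, HN N (q i) by move=> i; apply/hspan; apply: span_gen.
have qH : forall i, H (q i) by move=> i; apply: inclN.
have asuml : forall w (c : 'I_m -> R[i]), H w ->
    a (\sum_i c i *: q i) w = \sum_i c i * a (q i) w.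
  move=> w c Hw; apply: (sum_lin (P:=H) (f := fun x => a x w)) => //.
  by move=> al u v Hu Hv; exact: aLl.
have asumr : forall u (c : 'I_m -> R[i]), H u ->
    a u (\sum_i c i *: q i) = \sum_i (c i)^* * a u (q i).
  move=> u c Hu; apply: (sum_alin (P:=H) (f := fun x => a u x)) => //.
  by move=> al v w Hv Hw; exact: aLr.
pose B : 'M[R[i]]_m := \matrix_(k, j) a (q k) (q j).
have Bu : B \in unitmx.
  rewrite -row_free_unit -kermx_eq0; apply/eqP/row_matrixP => i; rewrite row0.
  set c := row i (kermx B).
  have hc : c *m B = 0 by rewrite /c -row_mul mulmx_ker row0.
  pose z := \sum_k c 0 k *: q k.
  have zN : HN N z by apply/hspan; exists (fun k => c 0 k).
  have az : forall w, HN N w -> a z w = ip0 0 w.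
    move=> w /hspan [d ->]; rewrite (ip0l s0 i0 I) asumr; last first.
      by apply: inclN; apply/hspan; exists (fun k => c 0 k).
    apply: big1 => j _; rewrite asuml ?qH //.
    have h0 : \sum_k c 0 k * a (q k) (q j) = 0.
      have := congr1 (fun X : 'M[R[i]]_(1, m) => X 0 j) hc; rewrite !mxE => h.
      by rewrite -[RHS]h; apply: eq_bigr => k _; rewrite /B !mxE.
    by rewrite h0 mulr0.
  have [u0 [_ [_ uq]]] := ex_gal N 0.
  have z0 : z = 0.
    rewrite (uq z zN az) (uq 0 sN.1) // => w Hw.
    by rewrite a0l ?(ip0l s0 i0 I) //; apply: inclN.
  apply/rowP => k; rewrite [RHS]mxE.
  exact: (fq (fun k => c 0 k) z0 k).
pose g : 'cV[R[i]]_m := \col_k ip (q k) uN.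
pose dc := invmx B *m g.
have Bd : B *m dc = g by rewrite /dc mulKVmx.
pose y := \sum_j (dc j 0)^* *: q j.
have yN : HN N y by apply/hspan; exists (fun j => (dc j 0)^*).
have yH := inclN _ yN.
have uH := inclN _ HNu.
have ady : forall w, HN N w -> a w y = ip w uN.
  move=> w /hspan [c ->]; rewrite (asuml y c yH).
  rewrite (sum_lin (P:=H) (f:= fun x => ip x uN)) //; last first.
    by move=> al u v Hu Hv; exact: iH.1 al u v uN Hu Hv uH.
  apply: eq_bigr => k _; congr (_ * _).
  rewrite asumr ?qH //.
  have := congr1 (fun X : 'M[R[i]]_(m, 1) => X k 0) Bd; rewrite !mxE => <-.
  by apply: eq_bigr => j _; rewrite conjCK mulrC /B [in RHS]mxE.
have HND : forall u v, HN N u -> HN N v -> HN N (u + v).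
  by move=> u v hu hv; have := sN.2 1 u v hu hv; rewrite scale1r.
pose K := 1 + CG2 * (1 + Cqo) * M.
have K0 : 0 <= CG2 * (1 + Cqo) * M.
  apply: mulr_ge0 => //; apply: mulr_ge0; first exact: ltW.
  by rewrite addr_ge0 // ltW.
have Kp : 0 < K by rewrite /K; apply: (lt_le_trans ltr01); rewrite lerDl.
have bound : CG1 * nrm y ^+ 2 <= K * nrm y * nrm uN.
  pose f := CG2%:C *: y.
  have [zN [zNN [zgal _]]] := ex_gal N f.
  have [u [Hu [ucont _]]] := ex_cont f.
  have zH := inclN _ zNN.
  have hqo := qo N f u zN Hu ucont zNN zgal.
  have [PiN orth] := hPi N u Hu.
  have hpy : nrm (u - Pi N u) <= nrm u := pyth sH iH Hu (inclN _ PiN) (orth _ PiN).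
  have hMu : nrm u <= M * nrm0 f := hM f u Hu ucont.
  have nf : nrm0 f = CG2 * nrm0 y := nrmZ s0 i0 I (ltW CG2p).
  have h0y := h0H y yH.
  have nz : nrm zN <= (1 + Cqo) * nrm u.
    have h1 : nrm zN <= nrm u + nrm (zN - u).
      have := nrm_triangle sH iH Hu (PB sH iH zH Hu).
      by rewrite [u + _]addrC subrK.
    have e1 : nrm (zN - u) = nrm (u - zN).
      by rewrite -opprB /nrm (nrmN sH iH (PB sH iH Hu zH)).
    rewrite mulrDl mul1r; apply: le_trans h1 _; rewrite lerD2l e1.
    apply: le_trans hqo _; apply: ler_wpM2l; [exact: ltW | exact: hpy].
  have nzy : nrm zN <= CG2 * (1 + Cqo) * M * nrm y.
    have hu2 : nrm u <= M * (CG2 * nrm y).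
      apply: le_trans hMu _; rewrite nf; apply: lerM2l' M0 _.
      exact: lerM2l' (ltW CG2p) h0y.
    apply: le_trans nz _.
    apply: le_trans (lerM2l' _ hu2) _; first by rewrite addr_ge0 // ltW.
    by rewrite le_eqVlt; apply/orP; left; apply/eqP; ring.
  have G := gard y yH.
  have eqa : a y y + Complex (CG2 * nrm0 y ^+ 2) 0 = ip (y + zN) uN.
    rewrite -ady; last exact: HND.
    have := aLl 1 y zN y yH zH yH; rewrite scale1r mul1r => ->.
    congr (_ + _); rewrite zgal // /f (ipZl s0 i0 _ I I) -(nrmE s0 i0 I).
    by rewrite complexr0 rmorphM rmorphXn.
  rewrite eqa in G; apply: le_trans G _.
  apply: le_trans (CSr sH iH (PD sH iH yH zH) uH) _.
  apply: lerM2r'; first exact: nge0.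
  apply: le_trans (nrm_triangle sH iH yH zH) _.
  by rewrite /K mulrDl mul1r lerD2l.
have yne : y <> 0.
  move=> y0; apply: un0; apply: (iH.2.2.2 uN uH).
  by rewrite -ady // y0 a0r.
have nyp : 0 < nrm y.
  rewrite lt0r nge0 andbT; apply/eqP => h; apply: yne.
  exact: (nrm_eq0 sH iH yH h).
have nup : 0 < nrm uN.
  rewrite lt0r nge0 andbT; apply/eqP => h; apply: un0.
  exact: (nrm_eq0 sH iH uH h).
have bound2 : CG1 * nrm y <= K * nrm uN.
  rewrite -(ler_pM2r nyp); move: bound; rewrite expr2.
  by rewrite mulrA [K * nrm y * _]mulrAC.
have elem : cmod (a uN y) / (nrm uN * nrm y) = nrm uN / nrm y.
  rewrite ady // -(nrmE sH iH uH) -rmorphXn /cmod /= expr0n /= addr0.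
  rewrite sqrtr_sqr ger0_norm ?exprn_ge0 ?nge0 //.
  by rewrite -/nrm; field; apply/andP; split; rewrite lt0r_neq0.
pose Ca := Num.max K1 0 + Cb + Num.max K2 0.
have k1 : K1 <= Num.max K1 0 by rewrite le_max lexx.
have k10 : 0 <= Num.max K1 0 by rewrite le_max lexx orbT.
have k2 : K2 <= Num.max K2 0 by rewrite le_max lexx.
have k20 : 0 <= Num.max K2 0 by rewrite le_max lexx orbT.
have n0ge0 : forall v, 0 <= nrm0 v by move=> v; exact: sqrtr_ge0.
have abnd : forall u v, H u -> H v -> cmod (a u v) <= Ca * nrm u * nrm v.
  move=> u v Hu Hv; rewrite /a /a_form; apply: le_trans (cmod_tri _ _ _) _.
  rewrite /Ca !mulrDl; apply: lerD; first apply: lerD.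
  - apply: le_trans (CSr s0 i0 I I) _.
    apply: ler_pM; [exact: n0ge0 | exact: n0ge0 | | exact: bD].
    apply: le_trans (hmu _) _.
    apply: le_trans (lerM2r' (n0ge0 _) k1) _.
    exact: lerM2l' k10 (bD u Hu).
  - exact: hb.
  - apply: le_trans (CSr s0 i0 I I) _.
    apply: ler_pM; [exact: n0ge0 | exact: n0ge0 | | exact: h0H].
    apply: le_trans (heps _) _.
    apply: le_trans (lerM2r' (n0ge0 _) k2) _.
    exact: lerM2l' k20 (h0H u Hu).
have ub : has_ubound [set cmod (a uN vN) / (nrm uN * nrm vN)
         | vN in [set vN | HN N vN /\ vN <> 0]].
  exists Ca => x [v [Hv vne] <-].
  have vH := inclN _ Hv.
  have nvp : 0 < nrm v.
    rewrite lt0r nge0 andbT; apply/eqP => h; apply: vne.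
    exact: (nrm_eq0 sH iH vH h).
  rewrite ler_pdivrMr ?mulr_gt0 // mulrA; exact: abnd.
have Sy : [set cmod (a uN vN) / (nrm uN * nrm vN)
         | vN in [set vN | HN N vN /\ vN <> 0]] (cmod (a uN y) / (nrm uN * nrm y)).
  by exists y.
apply: le_trans (ub_le_sup ub Sy).
rewrite elem.
have -> : 1 / (CG1^-1 * K) = CG1 / K.
  by field; apply/andP; split; rewrite lt0r_neq0.
rewrite ler_pdivlMr // mulrAC ler_pdivrMr // [nrm uN * K]mulrC.
exact: bound2.
Qed.
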